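(* Let $\mathfrak{P}_1=(\rho^{(1)}_{t_0},\mathcal{E}^{(1)}_{t_1\leftarrow t_0},\dots,\mathcal{E}^{(1)}_{t_n\leftarrow t_{n-1}})$ and $\mathfrak{P}_2=(\rho^{(2)}_{t_0},\mathcal{E}^{(2)}_{t_1\leftarrow t_0},\dots,\mathcal{E}^{(2)}_{t_n\leftarrow t_{n-1}})$ be multi-time quantum processes, with measurements $\{\Pi^{(1),t_k}_{b}\}$ and $\{\Pi^{(2),t_k}_{c}\}$ respectively, and let $\mathfrak{P}_1\otimes\mathfrak{P}_2$ be the process with initial state $\rho^{(1)}_{t_0}\otimes\rho^{(2)}_{t_0}$, channels $\mathcal{E}^{(1)}_{t_j\leftarrow t_{j-1}}\otimes\mathcal{E}^{(2)}_{t_j\leftarrow t_{j-1}}$, and product measurements $\{\Pi^{(1),t_k}_{b}\otimes\Pi^{(2),t_k}_{c}\}_{b,c}$. Then $$\mathcal{N}\big(\overrightarrow{Q}_{\rm KD}(\mathfrak{P}_1\otimes\mathfrak{P}_2)\big)=\mathcal{N}\big(\overrightarrow{Q}_{\rm KD}(\mathfrak{P}_1)\big)\mathcal{N}\big(\overrightarrow{Q}_{\rm KD}(\mathfrak{P}_2)\big)+\mathcal{N}\big(\overrightarrow{Q}_{\rm KD}(\mathfrak{P}_1)\big)+\mathcal{N}\big(\overrightarrow{Q}_{\rm KD}(\mathfrak{P}_2)\big),$$ and, with $\mathcal{N}'[Q]=\log\sum|Q|$, $$\mathcal{N}'\big(\overrightarrow{Q}_{\rm KD}(\mathfrak{P}_1\otimes\mathfrak{P}_2)\big)=\mathcal{N}'\big(\overrightarrow{Q}_{\rm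 KD}(\mathfrak{P}_1)\big)+\mathcal{N}'\big(\overrightarrow{Q}_{\rm KD}(\mathfrak{P}_2)\big).$$ The same holds for the left and doubled temporal KD distributions.
   Context: A multi-time quantum process $(\rho_{t_0},\mathcal{E}_{t_1\leftarrow t_0},\dots,\mathcal{E}_{t_n\leftarrow t_{n-1}})$ consists of a density operator and CPTP maps on finite-dimensional spaces, extended linearly to all operators; complete families of orthogonal projectors are fixed at each time. $\overrightarrow{Q}_{\rm KD}(b_n,\dots,b_0)=\operatorname{Tr}[\mathcal{E}_{t_n\leftarrow t_{n-1}}(\cdots\mathcal{E}_{t_1\leftarrow t_0}(\rho_{t_0}\Pi^{t_0}_{b_0})\Pi^{t_1}_{b_1}\cdots)\Pi^{t_n}_{b_n}]$; $\overleftarrow{Q}_{\rm KD}(a_n,\dots,a_0)=\operatorname{Tr}[\Pi^{t_n}_{a_n}\mathcal{E}_{t_n\leftarrow t_{n-1}}(\cdots\Pi^{t_1}_{a_1}\mathcal{E}_{t_1\leftarrow t_0}(\Pi^{t_0}_{a_0}\rho_{t_0})\cdots)]$; $\overleftrightarrow{Q}_{\rm KD}(a;b)=\operatorname{Tr}[\Pi^{t_n}_{a_n}\mathcal{E}_{t_n\leftarrow t_{n-1}}(\cdots\Pi^{t_1}_{a_1}\mathcal{E}_{t_1\leftarrow t_0}(\Pi^{t_0}_{a_0}\rho_{t_0}\Pi^{t_0}_{b_0})\Pi^{t_1}_{b_1}\cdots)\Pi^{t_n}_{b_n}]$. For any such distribution $Q$, $\mathcal{N}[Q]=\sum_{\text{all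 outcomes}}|Q|-1$. *)

(* Defs.v *)
From HB Require Import structures.
From mathcomp Require Import all_boot all_order all_algebra.
From mathcomp Require Import reals exp.
From mathcomp.real_closed Require Import complex mxtens.

Set Implicit Arguments.
Unset Strict Implicit.
Unset Printing Implicit Defensive.

Import Order.TTheory GRing.Theory Num.Theory.
Local Open Scope ring_scope.

Section QProc.
Variable R : realType.
Local Notation C := R[i].

Definition adjmx {m n} (A : 'M[C]_(m, n)) : 'M[C]_(n, m) := (map_mx conjc A)^T.

Definition psd {d} (A : 'M[C]_d) : Prop :=
  forall v : 'cV[C]_d, 0 <= (adjmx v *m A *m v) 0 0.

Definition density {d} (rho : 'M[C]_d) : Prop := psd rho /\ \tr rho = 1.

(* tensor product of two maps on operators, defined on the matrix-unit basis
   and extended linearly *)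
Definition map_tens {a1 b1 a2 b2}
  (f : 'M[C]_a1 -> 'M[C]_b1) (g : 'M[C]_a2 -> 'M[C]_b2)
  (X : 'M[C]_(a1 * a2)) : 'M[C]_(b1 * b2) :=
  \sum_(i < a1) \sum_(j < a1) \sum_(k < a2) \sum_(l < a2)
     X (mxtens_index (i, k)) (mxtens_index (j, l)) *:
       tensmx (f (delta_mx i j)) (g (delta_mx k l)).

Definition is_linear_map {a b} (f : 'M[C]_a -> 'M[C]_b) : Prop :=
  forall (c : C) (X Y : 'M[C]_a), f (c *: X + Y) = c *: f X + f Y.

Definition completely_positive {a b} (f : 'M[C]_a -> 'M[C]_b) : Prop :=
  forall (m : nat) (X : 'M[C]_(m * a)),
    psd X -> psd (map_tens (@id 'M[C]_m) f X).

Definition trace_preserving {a b} (f : 'M[C]_a -> 'M[C]_b) : Prop :=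
  forall X : 'M[C]_a, \tr (f X) = \tr X.

Definition CPTP {a b} (f : 'M[C]_a -> 'M[C]_b) : Prop :=
  [/\ is_linear_map f, completely_positive f & trace_preserving f].

Definition proj_family {d} {O : finType} (P : O -> 'M[C]_d) : Prop :=
  [/\ forall b, adjmx (P b) = P b,
      forall b b', P b *m P b' = if b == b' then P b else 0
    & \sum_(b : O) P b = 1%:M].

(* A multi-time process with n steps t_0 < ... < t_n: Hilbert space dimension
   dim k and outcome set Out k at time t_k, initial state rho, channels
   chan k : t_k -> t_{k+1} (k < n), and projectors proj k at time t_k (k <= n). *)
Record process (n : nat) := Process {
  dim : nat -> nat;
  Out : nat -> finType;
  rho : 'M[C]_(dim 0);
  chan : forall k, 'M[C]_(dim k) -> 'M[C]_(dim k.+1);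
  proj : forall k, Out k -> 'M[C]_(dim k)
}.
Arguments dim {n} p k.
Arguments Out {n} p k.
Arguments rho {n} p.
Arguments chan {n} p k _.
Arguments proj {n} p k _.

Definition is_process n (P : process n) : Prop :=
  [/\ density (rho P),
      forall k, (k < n)%N -> CPTP (chan P k)
    & forall k, (k <= n)%N -> proj_family (proj P k)].

(* outcome sequences (b_0, ..., b_k), as nested pairs *)
Fixpoint outs (O : nat -> finType) (k : nat) : finType :=
  match k with
  | 0 => O 0
  | k'.+1 => (outs O k' * O k'.+1)%type
  end.

Unset Implicit Arguments.
Section KD.
Variables (n : nat) (P : process n).
Local Notation d := (dim P).
Local Notation E := (chan P).
Local Notation Pi := (proj P).

Fixpoint fwd_op (k : nat) : outs (Out P) k -> 'M[C]_(d k) :=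
  match k return outs (Out P) k -> 'M[C]_(d k) with
  | 0 => fun b => rho P *m Pi 0%N b
  | k'.+1 => fun bb => E k' (fwd_op k' bb.1) *m Pi k'.+1 bb.2
  end.

Fixpoint bwd_op (k : nat) : outs (Out P) k -> 'M[C]_(d k) :=
  match k return outs (Out P) k -> 'M[C]_(d k) with
  | 0 => fun a => Pi 0%N a *m rho P
  | k'.+1 => fun aa => Pi k'.+1 aa.2 *m E k' (bwd_op k' aa.1)
  end.

Fixpoint dbl_op (k : nat) : outs (Out P) k -> outs (Out P) k -> 'M[C]_(d k) :=
  match k return outs (Out P) k -> outs (Out P) k -> 'M[C]_(d k) with
  | 0 => fun a b => Pi 0%N a *m rho P *m Pi 0%N b
  | k'.+1 => fun aa bb => Pi k'.+1 aa.2 *m E k' (dbl_op k' aa.1 bb.1) *m Pi k'.+1 bb.2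
  end.

Definition QKD_fwd (b : outs (Out P) n) : C := \tr (fwd_op n b).
Definition QKD_bwd (a : outs (Out P) n) : C := \tr (bwd_op n a).
Definition QKD_dbl (ab : outs (Out P) n * outs (Out P) n) : C :=
  \tr (dbl_op n ab.1 ab.2).
End KD.
Set Implicit Arguments.

Definition tens_process n (P1 P2 : process n) : process n :=
  @Process n (fun k : nat => (dim P1 k * dim P2 k)%N)
    (fun k => (Out P1 k * Out P2 k)%type)
    (tensmx (rho P1) (rho P2))
    (fun k => map_tens (chan P1 k) (chan P2 k))
    (fun k bc => tensmx (proj P1 k bc.1) (proj P2 k bc.2)).

Definition negativity {T : finType} (Q : T -> C) : R :=
  \sum_(t : T) Normc.normc (Q t) - 1.
Definition log_negativity {T : finType} (Q : T -> C) : R :=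
  ln (\sum_(t : T) Normc.normc (Q t)).

End QProc.

Arguments fwd_op {R n} P k _.
Arguments bwd_op {R n} P k _.
Arguments dbl_op {R n} P k _ _.
Arguments QKD_fwd {R n} P _.
Arguments QKD_bwd {R n} P _.
Arguments QKD_dbl {R n} P _.

(* Main.v *)
Require Import Defs.
From HB Require Import structures.
From mathcomp Require Import all_boot all_order all_algebra.
From mathcomp Require Import reals exp.
From mathcomp.real_closed Require Import complex mxtens.
From mathcomp Require Import ring.
Import Order.TTheory GRing.Theory Num.Theory.
Local Open Scope ring_scope.
Set Implicit Arguments.
Unset Strict Implicit.

Section L.
Variable R : realType.
Local Notation C := R[i].

Lemma lin0 a b (f : 'M[C]_a -> 'M[C]_b) : is_linear_map f -> f 0 = 0.
Proof.
move=> L; have := L 1 0 0; rewrite !scale1r addr0.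
by move/(congr1 (fun x => x - f 0)); rewrite subrr addrK => <-.
Qed.

Lemma linD a b (f : 'M[C]_a -> 'M[C]_b) : is_linear_map f ->
  forall X Y, f (X + Y) = f X + f Y.
Proof. by move=> L X Y; have := L 1 X Y; rewrite !scale1r. Qed.

Lemma linZ a b (f : 'M[C]_a -> 'M[C]_b) : is_linear_map f ->
  forall c X, f (c *: X) = c *: f X.
Proof. move=> L c X; have := L c X 0; rewrite !addr0 (lin0 L) addr0; done. Qed.

Lemma lin_sum a b (f : 'M[C]_a -> 'M[C]_b) I (r : seq I) (F : I -> 'M[C]_a) :
  is_linear_map f -> f (\sum_(i <- r) F i) = \sum_(i <- r) f (F i).
Proof.
move=> L; exact: (big_morph f (linD L) (lin0 L)).
Qed.

Lemma tensDl m n p q (A A' : 'M[C]_(m, n)) (B : 'M[C]_(p, q)) :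
  (A + A') *t B = A *t B + A' *t B.
Proof. by apply/matrixP=> i j; rewrite !mxE mulrDl. Qed.
Lemma tensDr m n p q (A : 'M[C]_(m, n)) (B B' : 'M[C]_(p, q)) :
  A *t (B + B') = A *t B + A *t B'.
Proof. by apply/matrixP=> i j; rewrite !mxE mulrDr. Qed.
Lemma tensZl m n p q c (A : 'M[C]_(m, n)) (B : 'M[C]_(p, q)) :
  (c *: A) *t B = c *: (A *t B).
Proof. by apply/matrixP=> i j; rewrite !mxE mulrA. Qed.
Lemma tensZr m n p q c (A : 'M[C]_(m, n)) (B : 'M[C]_(p, q)) :
  A *t (c *: B) = c *: (A *t B).
Proof. by apply/matrixP=> i j; rewrite !mxE mulrCA. Qed.

Lemma tens_suml m n p q I (r : seq I) (F : I -> 'M[C]_(m, n)) (B : 'M[C]_(p, q)) :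
  (\sum_(i <- r) F i) *t B = \sum_(i <- r) (F i *t B).
Proof.
exact: (big_morph (fun A => A *t B) (fun x y => tensDl x y B) (tens0mx B)).
Qed.
Lemma tens_sumr m n p q I (r : seq I) (A : 'M[C]_(m, n)) (F : I -> 'M[C]_(p, q)) :
  A *t (\sum_(i <- r) F i) = \sum_(i <- r) (A *t F i).
Proof.
exact: (big_morph (fun B => A *t B) (fun x y => tensDr A x y) (tensmx0 A)).
Qed.

Lemma map_tensE a1 b1 a2 b2 (f : 'M[C]_a1 -> 'M[C]_b1) (g : 'M[C]_a2 -> 'M[C]_b2)
  X Y : is_linear_map f -> is_linear_map g ->
  map_tens f g (X *t Y) = f X *t g Y.
Proof.
move=> Lf Lg; rewrite /map_tens {2}(matrix_sum_delta X) {2}(matrix_sum_delta Y).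
rewrite lin_sum // tens_suml; apply: eq_bigr => i _.
rewrite lin_sum // tens_suml; apply: eq_bigr => j _.
rewrite lin_sum // tens_sumr; apply: eq_bigr => k _.
rewrite lin_sum // tens_sumr; apply: eq_bigr => l _.
rewrite tensmxE (linZ Lf) (linZ Lg) tensZl tensZr scalerA mulrC. done.
Qed.

Lemma tr_tens m n (A : 'M[C]_m) (B : 'M[C]_n) : \tr (A *t B) = \tr A * \tr B.
Proof.
rewrite /mxtrace mulr_sum; apply: eq_bigr => i _; by rewrite !mxE.
Qed.


Fixpoint osplit (O1 O2 : nat -> finType) k :
  outs (fun k => (O1 k * O2 k)%type) k -> outs O1 k * outs O2 k :=
  match k return outs (fun k => (O1 k * O2 k)%type) k -> outs O1 k * outs O2 k with
  | 0 => fun x => x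
  | k'.+1 => fun x => let p := @osplit O1 O2 k' x.1 in ((p.1, x.2.1), (p.2, x.2.2))
  end.

Fixpoint omerge (O1 O2 : nat -> finType) k :
  outs O1 k * outs O2 k -> outs (fun k => (O1 k * O2 k)%type) k :=
  match k return outs O1 k * outs O2 k -> outs (fun k => (O1 k * O2 k)%type) k with
  | 0 => fun x => x
  | k'.+1 => fun x => (@omerge O1 O2 k' (x.1.1, x.2.1), (x.1.2, x.2.2))
  end.

Lemma omergeK O1 O2 k : cancel (@omerge O1 O2 k) (@osplit O1 O2 k).
Proof.
elim: k => [|k IH] [x y] //=.
case: x y => x1 x2 [y1 y2] /=; by rewrite IH.
Qed.

Lemma osplitK O1 O2 k : cancel (@osplit O1 O2 k) (@omerge O1 O2 k).
Proof.
elim: k => [|k IH] x //=.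
case: x => x [a b] /=; by rewrite -[in RHS](IH x); case: (osplit x).
Qed.

Section T.
Variables (n : nat) (P1 P2 : process R n).
Hypotheses (H1 : is_process P1) (H2 : is_process P2).

Lemma fwd_tens k (bb : outs (Out (tens_process P1 P2)) k) : (k <= n)%N ->
  fwd_op (tens_process P1 P2) k bb =
  fwd_op P1 k (osplit bb).1 *t fwd_op P2 k (osplit bb).2.
Proof.
elim: k bb => [|k IH] bb kn /=; first by rewrite tensmx_mul.
rewrite IH ?(ltnW kn) // map_tensE ?tensmx_mul //.
  by case: H1 => _ /(_ k kn) [].
by case: H2 => _ /(_ k kn) [].
Qed.

Lemma bwd_tens k (bb : outs (Out (tens_process P1 P2)) k) : (k <= n)%N ->
  bwd_op (tens_process P1 P2) k bb =
  bwd_op P1 k (osplit bb).1 *t bwd_op P2 k (osplit bb).2.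
Proof.
elim: k bb => [|k IH] bb kn /=; first by rewrite tensmx_mul.
rewrite IH ?(ltnW kn) // map_tensE ?tensmx_mul //.
  by case: H1 => _ /(_ k kn) [].
by case: H2 => _ /(_ k kn) [].
Qed.

Lemma dbl_tens k (aa bb : outs (Out (tens_process P1 P2)) k) : (k <= n)%N ->
  dbl_op (tens_process P1 P2) k aa bb =
  dbl_op P1 k (osplit aa).1 (osplit bb).1 *t dbl_op P2 k (osplit aa).2 (osplit bb).2.
Proof.
elim: k aa bb => [|k IH] aa bb kn /=; first by rewrite !tensmx_mul.
rewrite IH ?(ltnW kn) // map_tensE ?tensmx_mul //.
  by case: H1 => _ /(_ k kn) [].
by case: H2 => _ /(_ k kn) [].
Qed.

End T.

Lemma sum_factor (T1 T2 T : finType) (h : T1 * T2 -> T) (hi : T -> T1 * T2)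
  (F : T -> R) (f1 : T1 -> R) (f2 : T2 -> R) :
  cancel h hi -> cancel hi h -> (forall p, F (h p) = f1 p.1 * f2 p.2) ->
  \sum_(t : T) F t = (\sum_(x : T1) f1 x) * (\sum_(y : T2) f2 y).
Proof.
move=> hK hiK HF.
rewrite (reindex h) /=; last by exists hi => x _.
under eq_bigr => p _ do rewrite HF.
rewrite -(pair_big xpredT xpredT (fun x y => f1 x * f2 y)) /= mulr_suml.
by apply: eq_bigr => x _; rewrite mulr_sumr.
Qed.

Section S.
Variables (n : nat) (P : process R n).
Hypothesis HP : is_process P.

Lemma projS k : (k <= n)%N -> \sum_b @proj _ _ P k b = 1%:M.
Proof. move=> kn; case: HP => _ _ /(_ k kn); rewrite /proj_family; by case. Qed.

Lemma trE k : (k < n)%N -> forall X, \tr (@chan _ _ P k X) = \tr X.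
Proof. move=> kn X; case: HP => _ /(_ k kn); rewrite /CPTP; case=> _ _ H _; exact: H. Qed.

Lemma trrho : \tr (rho P) = 1.
Proof. by case: HP => [[]]. Qed.

Lemma fwd_sum k : (k <= n)%N -> \sum_(bb : outs (Out P) k) \tr (fwd_op P k bb) = 1.
Proof.
elim: k => [|k IH] kn.
  by rewrite /= -raddf_sum -mulmx_sumr projS // mulmx1; exact: trrho.
rewrite -(pair_bigA _ (fun bb b => \tr (fwd_op P k.+1 (bb, b)))) /=.
rewrite -IH ?(ltnW kn) //; apply: eq_bigr => bb _.
by rewrite -raddf_sum -mulmx_sumr projS // mulmx1; apply: trE.
Qed.

Lemma bwd_sum k : (k <= n)%N -> \sum_(bb : outs (Out P) k) \tr (bwd_op P k bb) = 1.
Proof.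
elim: k => [|k IH] kn.
  by rewrite /= -raddf_sum -mulmx_suml projS // mul1mx; exact: trrho.
rewrite -(pair_bigA _ (fun bb b => \tr (bwd_op P k.+1 (bb, b)))) /=.
rewrite -IH ?(ltnW kn) //; apply: eq_bigr => bb _.
by rewrite -raddf_sum -mulmx_suml projS // mul1mx; apply: trE.
Qed.

Lemma dbl_sum k : (k <= n)%N ->
  \sum_(ab : outs (Out P) k * outs (Out P) k) \tr (dbl_op P k ab.1 ab.2) = 1.
Proof.
elim: k => [|k IH] kn.
  rewrite /= -(pair_bigA _ (fun a b => \tr (@proj _ _ P 0 a *m rho P *m @proj _ _ P 0 b))) /=.
  rewrite -trrho; under eq_bigr => a _ do rewrite -raddf_sum -mulmx_sumr projS // mulmx1.
  by rewrite -raddf_sum -!mulmx_suml projS // mul1mx.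
rewrite -(pair_bigA _ (fun aa bb => \tr (dbl_op P k.+1 aa bb))) /=.
rewrite -IH ?(ltnW kn) // -(pair_bigA _ (fun aa bb => \tr (dbl_op P k aa bb))) /=.
rewrite -(pair_bigA _ (fun aa a => \sum_(j : outs (Out P) k.+1) \tr (dbl_op P k.+1 (aa, a) j))) /=.
apply: eq_bigr => aa _.
under eq_bigr => a _ do rewrite -(pair_bigA _ (fun bb b => \tr (dbl_op P k.+1 (aa, a) (bb, b)))) /=.
rewrite exchange_big /=; apply: eq_bigr => bb _.
under eq_bigr => a _ do rewrite -raddf_sum -mulmx_sumr projS // mulmx1.
by rewrite -raddf_sum -!mulmx_suml projS // mul1mx; apply: trE.
Qed.

End S.

Lemma sum_normc_ge1 (T : finType) (Q : T -> C) : \sum_t Q t = 1 ->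
  1 <= \sum_t Normc.normc (Q t).
Proof.
move=> HQ; have <- : Normc.normc (\sum_t Q t) = 1 by rewrite HQ Normc.normc1.
elim/big_ind2: _ => //; first by rewrite Normc.normc0.
by move=> x1 x2 y1 y2 h1 h2; apply: le_trans (@le_normcD R _ _) _; apply: lerD.
Qed.

Lemma final (T1 T2 T : finType) (Q1 : T1 -> C) (Q2 : T2 -> C) (Q : T -> C) :
  \sum_t Q1 t = 1 -> \sum_t Q2 t = 1 ->
  \sum_t Normc.normc (Q t) = (\sum_t Normc.normc (Q1 t)) * (\sum_t Normc.normc (Q2 t)) ->
  negativity Q = negativity Q1 * negativity Q2 + negativity Q1 + negativity Q2 /\
  log_negativity Q = log_negativity Q1 + log_negativity Q2.
Proof.
move=> /sum_normc_ge1 h1 /sum_normc_ge1 h2 HQ.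
rewrite /negativity /log_negativity HQ; split; first by ring.
apply: lnM; rewrite posrE; apply: lt_le_trans h1 || apply: lt_le_trans h2; exact: ltr01.
Qed.

End L.

Theorem mainTheorem10 (R : realType) (n : nat) (P1 P2 : process R n) :
  is_process P1 -> is_process P2 ->
  let P12 := tens_process P1 P2 in
  (* right (forward) KD distribution *)
  (negativity (QKD_fwd P12) =
     negativity (QKD_fwd P1) * negativity (QKD_fwd P2)
     + negativity (QKD_fwd P1) + negativity (QKD_fwd P2)
   /\ log_negativity (QKD_fwd P12) =
     log_negativity (QKD_fwd P1) + log_negativity (QKD_fwd P2)) /\
  (* left (backward) KD distribution *)
  (negativity (QKD_bwd P12) =
     negativity (QKD_bwd P1) * negativity (QKD_bwd P2)
     + negativity (QKD_bwd P1) + negativity (QKD_bwd P2)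
   /\ log_negativity (QKD_bwd P12) =
     log_negativity (QKD_bwd P1) + log_negativity (QKD_bwd P2)) /\
  (* doubled KD distribution *)
  (negativity (QKD_dbl P12) =
     negativity (QKD_dbl P1) * negativity (QKD_dbl P2)
     + negativity (QKD_dbl P1) + negativity (QKD_dbl P2)
   /\ log_negativity (QKD_dbl P12) =
     log_negativity (QKD_dbl P1) + log_negativity (QKD_dbl P2)).
Proof.
move=> H1 H2 P12; split; [|split].
- have s1 : \sum_t QKD_fwd P1 t = 1 := fwd_sum H1 (leqnn n).
  have s2 : \sum_t QKD_fwd P2 t = 1 := fwd_sum H2 (leqnn n).
  apply: (final s1 s2).
  apply: (sum_factor (h := @omerge (Out P1) (Out P2) n) (hi := @osplit _ _ n)).
  + exact: omergeK.
  + exact: osplitK.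
  + by move=> p; rewrite /QKD_fwd fwd_tens // omergeK tr_tens Normc.normcM.
- have s1 : \sum_t QKD_bwd P1 t = 1 := bwd_sum H1 (leqnn n).
  have s2 : \sum_t QKD_bwd P2 t = 1 := bwd_sum H2 (leqnn n).
  apply: (final s1 s2).
  apply: (sum_factor (h := @omerge (Out P1) (Out P2) n) (hi := @osplit _ _ n)).
  + exact: omergeK.
  + exact: osplitK.
  + by move=> p; rewrite /QKD_bwd bwd_tens // omergeK tr_tens Normc.normcM.
- have s1 : \sum_t QKD_dbl P1 t = 1 := dbl_sum H1 (leqnn n).
  have s2 : \sum_t QKD_dbl P2 t = 1 := dbl_sum H2 (leqnn n).
  apply: (final s1 s2).
  apply: (sum_factor
    (h := fun p => (@omerge (Out P1) (Out P2) n (p.1.1, p.2.1),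
                    @omerge (Out P1) (Out P2) n (p.1.2, p.2.2)))
    (hi := fun t => (((@osplit _ _ n t.1).1, (@osplit _ _ n t.2).1),
                     ((@osplit _ _ n t.1).2, (@osplit _ _ n t.2).2)))).
  + by move=> [[a1 b1] [a2 b2]] /=; rewrite !omergeK.
  + by move=> [a b] /=; rewrite -!surjective_pairing !osplitK.
  + by move=> p; rewrite /QKD_dbl dbl_tens // !omergeK tr_tens Normc.normcM.
Qed.
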